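(* Let $G$ and $H$ be two nontrivial connected graphs and let $S\subseteq V(G)$ and $T\subseteq V(H)$ be cycle convex sets in $G$ and $H$ respectively. Then $S\times T$ is cycle convex in $G\Box H$.
   Context: All graphs are finite, simple and undirected. For a graph $G$ and $S\subseteq V(G)$, the cycle interval $\langle S\rangle$ consists of the vertices of $S$ together with every vertex $w\in V(G)\setminus S$ such that $G[S\cup\{w\}]$ contains a cycle through $w$; $S$ is cycle convex if $\langle S\rangle=S$. The Cartesian product $G\Box H$ has vertex set $V(G)\times V(H)$, with $(g_1,h_1)\sim(g_2,h_2)$ iff ($g_1\sim g_2$ and $h_1=h_2$) or ($g_1=g_2$ and $h_1\sim h_2$). A graph is nontrivial if it has at least two vertices. *)

(* Defs.v *)
From mathcomp Require Import all_boot.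
Set Implicit Arguments. Unset Strict Implicit. Unset Printing Implicit Defensive.

Definition simple_graph (V : finType) (e : rel V) : Prop :=
  symmetric e /\ irreflexive e.

Definition connected_graph (V : finType) (e : rel V) : Prop :=
  forall x y : V, connect e x y.

Definition nontrivial (V : finType) : Prop := 1 < #|V|.

Definition is_graph_cycle (V : finType) (e : rel V) (c : seq V) : bool :=
  [&& 2 < size c, uniq c & cycle e c].

Definition in_cycle_interval (V : finType) (e : rel V) (S : {set V}) (w : V) : Prop :=
  w \in S \/
  (w \notin S /\ exists c : seq V,
     [/\ is_graph_cycle e c, w \in c & all (fun v => (v \in S) || (v == w)) c]).

Definition cycle_convex (V : finType) (e : rel V) (S : {set V}) : Prop :=
  forall w, in_cycle_interval e S w <-> w \in S.

Definition box_rel (V W : finType) (e1 : rel V) (e2 : rel W) : rel (V * W) :=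
  fun x y => (e1 x.1 y.1 && (x.2 == y.2)) || ((x.1 == y.1) && e2 x.2 y.2).

(* Main.v *)
Require Import Defs.
From mathcomp Require Import all_boot.

Lemma path_uniq_strict (V : eqType) (e : rel V) x p :
  path (fun a b => (a == b) || e a b) x p -> uniq (x :: p) -> path e x p.
Proof.
elim: p x => [//|y p IH] x /= /andP[/orP[/eqP->|exy] Hp] /andP[Hx Hu].
  by rewrite inE eqxx in Hx.
rewrite exy /=; apply: IH => //.
Qed.

Lemma key (V W : finType) (e1 : rel V) (e2 : rel W) (S : {set V}) (T : {set W})
  g h (p : seq (V * W)) :
  cycle_convex e1 S -> g \notin S -> 1 < size p -> uniq p ->
  all (fun x => x \in setX S T) p ->
  path (box_rel e1 e2) (g, h) (rcons p (g, h)) -> False.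
Proof.
move=> Hc gS.
case: p => [//|[g2 h2] p0] /= sz /andP[u2p0 up0] /andP[].
rewrite in_setX => /andP[g2S h2T] allp0 /andP[b2].
rewrite rcons_path => /andP[pp0 b1].
case E1: (last (g2, h2) p0) => [g1 h1].
have u1in : (g1, h1) \in p0.
  case: p0 sz E1 {u2p0 up0 allp0 pp0 b1} => [//|a p1] _ E1.
  by rewrite -E1 /= mem_last.
have /andP[g1S h1T] : (g1 \in S) && (h1 \in T).
  by rewrite -in_setX; exact: (allP allp0).
rewrite E1 /box_rel /= in b1.
rewrite /box_rel /= in b2.
have [e12 hh2] : e1 g g2 /\ h = h2.
  case/orP: b2 => /andP[A B]; first by split => //; apply/eqP.
  by move/eqP: A => A; rewrite A g2S in gS.
have [e11 hh1] : e1 g1 g /\ h1 = h.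
  case/orP: b1 => /andP[A B]; first by split => //; apply/eqP.
  by move/eqP: A => A; rewrite -A g1S in gS.
have g12 : g1 != g2.
  apply/eqP => E; move: u2p0; rewrite -E -hh2 hh1 in u1in *.
  by rewrite u1in.
set R := fun a b : V => (a == b) || e1 a b.
have pR : path R g2 (map fst p0).
  have -> : g2 = (g2, h2).1 by [].
  rewrite path_map; apply: sub_path pp0 => x y.
  rewrite /box_rel /R /= => /orP[/andP[A _]|/andP[A _]]; by rewrite A ?orbT.
have lastg : last g2 (map fst p0) = g1.
  by have -> : g2 = (g2, h2).1 by []; rewrite last_map E1.
have inS : forall x, x \in map fst p0 -> x \in S.
  move=> x /mapP[[a b] ab ->] /=.
  by have := allP allp0 _ ab; rewrite in_setX => /andP[].
case: (shortenP pR) lastg => p' pp' up' sub' lastg.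
have pe : path e1 g2 p' := @path_uniq_strict _ e1 _ _ pp' up'.
have gnot : g \notin g2 :: p'.
  rewrite inE negb_or; apply/andP; split.
    by apply/eqP => E; rewrite E g2S in gS.
  by apply/negP => /sub' /inS; apply/negP.
apply: (negP gS); apply: (Hc g).1; right; split => //.
exists [:: g, g2 & p']; split.
- rewrite /is_graph_cycle /= gnot -/(uniq (g2 :: p')) up' /=.
  apply/andP; split.
    case: p' {pp' up' sub' pe gnot} lastg => [/= E|//].
    by rewrite E eqxx in g12.
  rewrite e12 /= rcons_path pe lastg e11 //.
- by rewrite inE eqxx.
- rewrite /= eqxx orbT g2S /=; apply/allP => x xp.
  by rewrite (inS _ (sub' _ xp)).
Qed.

Lemma key2 (V W : finType) (e1 : rel V) (e2 : rel W) (S : {set V}) (T : {set W})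
  g h (c : seq (V * W)) :
  cycle_convex e1 S -> cycle_convex e2 T -> (g, h) \notin setX S T ->
  is_graph_cycle (box_rel e1 e2) c -> (g, h) \in c ->
  all (fun v => (v \in setX S T) || (v == (g, h))) c -> False.
Proof.
move=> HS HT wn /and3P[sz uc cc] wc ac.
have := rot_index wc; set i := index _ _ => Er.
set p := drop i.+1 c ++ take i c in Er.
have sz' : 2 < size (rot i c) by rewrite size_rot.
have uc' : uniq (rot i c) by rewrite rot_uniq.
have cc' : cycle (box_rel e1 e2) (rot i c) by rewrite rot_cycle.
have prc : perm_eq (rot i c) c by rewrite (perm_rot i c c) perm_refl.
have ac' : all (fun v => (v \in setX S T) || (v == (g, h))) (rot i c) by rewrite (perm_all _ prc).
rewrite Er in sz' uc' cc' ac'.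
move: sz' uc' cc' ac' => /= sz' /andP[wp up] cp /andP[_ ap].
have ap' : all (fun x => x \in setX S T) p.
  apply/allP => x xp; have := allP ap x xp.
  case: eqP => [E|_]; last by rewrite orbF.
  by rewrite E in xp; rewrite xp in wp.
move: wn; rewrite in_setX negb_and => /orP[gS|hT].
  apply: (@key V W e1 e2 S T g h p HS gS sz' up ap'); exact: cp.
pose sw := fun x : V * W => (x.2, x.1).
have swi : injective sw by move=> [a b] [c' d] [-> ->].
apply: (@key W V e2 e1 T S h g (map sw p) HT hT).
all: try by rewrite size_map.
all: try by rewrite map_inj_uniq.
- apply/allP => y /mapP[x xp ->]; move: (allP ap' x xp).
  by case: x {xp} => a b; rewrite /= !in_setX andbC.
- have -> : (h, g) = sw (g, h) by [].
  rewrite -map_rcons path_map; apply: sub_path cp => x y.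
  rewrite /box_rel /=.
  by case: (e1 _ _); case: (e2 _ _); case: (x.1 == _); case: (x.2 == _).
Qed.


Theorem mainTheorem4 (V W : finType) (e1 : rel V) (e2 : rel W)
  (S : {set V}) (T : {set W}) :
  simple_graph e1 -> simple_graph e2 ->
  nontrivial V -> nontrivial W ->
  connected_graph e1 -> connected_graph e2 ->
  cycle_convex e1 S -> cycle_convex e2 T ->
  cycle_convex (box_rel e1 e2) (setX S T).
Proof.
move=> _ _ _ _ _ _ HS HT [g h]; split; last by left.
case=> [//|[wn [c [cc wc ac]]]].
by case: (@key2 V W e1 e2 S T g h c HS HT wn cc wc ac).
Qed.
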